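(* Let $Q$ be a proper quasi-ideal of a finite-dimensional Lie algebra $L$ over a field $F$ which is modular* in $L$. Then $Q$ is a strong quasi-ideal of $L$; consequently either $Q$ is a strong ideal of $L$, or $L$ is almost abelian, or $F$ has characteristic two and there is an isomorphism $L\cong K$ carrying $Q$ onto $Fc$.
   Context: $K$ denotes the three-dimensional Lie algebra with basis $a,b,c$ and products $[a,b]=c$, $[b,c]=b$, $[a,c]=a$. $\langle U,B\rangle$ denotes the subalgebra generated by $U\cup B$. A subalgebra $Q$ is a quasi-ideal of $L$ if $[Q,V]\subseteq Q+V$ for every subspace $V$ of $L$. A subalgebra $U$ is modular* in $L$ if $\langle U,B\rangle\cap C=\langle B,U\cap C\rangle$ for all subalgebras $B\subseteq C$ of $L$, and $\langle U\cap B,C\rangle=\langle B,C\rangle\cap U$ for all subalgebras $B,C$ of $L$ with $C\subseteq U$. A subalgebra $U$ of $L$ is a strong ideal (respectively strong quasi-ideal) of $L$ if every one-dimensional subalgebra of $U$ is an ideal (respectively quasi-ideal) of $L$. $L$ is almost abelian if $L=L^2\oplus Fx$ for some $x$, where $L^2=[L,L]$ is abelian and $\mathrm{ad}\,x$ acts as the identity map on $L^2$. *)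

(* Defs.v *)
From HB Require Import structures.
From mathcomp Require Import all_boot all_order all_algebra.
Set Implicit Arguments. Unset Strict Implicit. Unset Printing Implicit Defensive.
Import GRing.Theory.
Local Open Scope ring_scope.

Section Lie.
Variables (F : fieldType) (L : vectType F).

Definition is_lie_bracket (br : L -> L -> L) : Prop :=
  [/\ forall (a : F) (x y z : L), br (a *: x + y) z = a *: br x z + br y z,
      forall (a : F) (x y z : L), br x (a *: y + z) = a *: br x y + br x z,
      forall x : L, br x x = 0 &
      forall x y z : L, br x (br y z) + br y (br z x) + br z (br x y) = 0].

Variable br : L -> L -> L.

(* [A, B] : the subspace spanned by all brackets [a, b], a in A, b in B
   (by bilinearity it suffices to take basis vectors). *)
Definition brsp (A B : {vspace L}) : {vspace L} :=
  (<<[seq br a b | a <- vbasis A, b <- vbasis B]>>)%VS.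

Definition subalgebra (A : {vspace L}) : Prop :=
  forall x y, x \in A -> y \in A -> br x y \in A.

(* The subalgebra generated by (the subspace) X: iterate S |-> S + [S,S]
   dim L times (the chain stabilises within dim L steps). *)
Definition gen (X : {vspace L}) : {vspace L} :=
  iter (\dim {:L}) (fun S => (S + brsp S S)%VS) X.

Definition genU (U B : {vspace L}) : {vspace L} := gen (U + B)%VS.

Definition ideal (I : {vspace L}) : Prop :=
  forall x y, x \in I -> br x y \in I.

Definition quasi_ideal (Q : {vspace L}) : Prop :=
  subalgebra Q /\ forall V : {vspace L}, (brsp Q V <= Q + V)%VS.

Definition modular_star (U : {vspace L}) : Prop :=
  subalgebra U /\
  (forall B C : {vspace L}, subalgebra B -> subalgebra C -> (B <= C)%VS ->
     (genU U B :&: C)%VS = genU B (U :&: C)%VS) /\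
  (forall B C : {vspace L}, subalgebra B -> subalgebra C -> (C <= U)%VS ->
     genU (U :&: B)%VS C = (genU B C :&: U)%VS).

Definition strong_ideal (U : {vspace L}) : Prop :=
  subalgebra U /\
  forall S : {vspace L}, (S <= U)%VS -> \dim S = 1%N -> subalgebra S -> ideal S.

Definition strong_quasi_ideal (U : {vspace L}) : Prop :=
  subalgebra U /\
  forall S : {vspace L}, (S <= U)%VS -> \dim S = 1%N -> subalgebra S ->
    quasi_ideal S.

Definition almost_abelian : Prop :=
  exists x : L,
    let L2 := brsp fullv fullv in
    [/\ (L2 + <[x]>)%VS = fullv, (L2 :&: <[x]>)%VS = 0%VS,
        (forall u v, u \in L2 -> v \in L2 -> br u v = 0) &
        (forall u, u \in L2 -> br x u = u)].

(* There is an isomorphism L ~= K carrying Q onto Fc, where K has basis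
   a,b,c with [a,b]=c, [b,c]=b, [a,c]=a: equivalently L has a basis
   (the preimages) a,b,c with these products, and Q = F c. *)
Definition iso_K_with (Q : {vspace L}) : Prop :=
  exists a b c : L,
    [/\ basis_of fullv [:: a; b; c],
        br a b = c, br b c = b, br a c = a & Q = <[c]>%VS].

End Lie.

(* Main.v *)
From HB Require Import structures.
From mathcomp Require Import all_boot all_order all_algebra.
From Stdlib Require Import Ring Classical.
Require Import Defs.
Set Implicit Arguments. Unset Strict Implicit. Unset Printing Implicit Defensive.
Import GRing.Theory.
Local Open Scope ring_scope.


Lemma br0l (F : fieldType) (L : vectType F) (br : L -> L -> L) :
  is_lie_bracket br -> forall z, br 0 z = 0.
Proof.
case=> Hl _ _ _ z; have := Hl 1 0 0 z; rewrite !scale1r addr0.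
by move=> E; apply: (addrI (br 0 z)); rewrite addr0 -E.
Qed.

Lemma br0r (F : fieldType) (L : vectType F) (br : L -> L -> L) :
  is_lie_bracket br -> forall z, br z 0 = 0.
Proof.
case=> _ Hl _ _ z; have := Hl 1 z 0 0; rewrite !scale1r addr0.
by move=> E; apply: (addrI (br z 0)); rewrite addr0 -E.
Qed.

Lemma brDl (F : fieldType) (L : vectType F) (br : L -> L -> L) :
  is_lie_bracket br -> forall x y z, br (x + y) z = br x z + br y z.
Proof. by move=> H x y z; case: H => Hl _ _ _; have := Hl 1 x y z; rewrite !scale1r. Qed.

Lemma brDr (F : fieldType) (L : vectType F) (br : L -> L -> L) :
  is_lie_bracket br -> forall x y z, br z (x + y) = br z x + br z y.
Proof. by move=> H x y z; case: H => _ Hl _ _; have := Hl 1 z x y; rewrite !scale1r. Qed.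

Lemma brZl (F : fieldType) (L : vectType F) (br : L -> L -> L) :
  is_lie_bracket br -> forall a x z, br (a *: x) z = a *: br x z.
Proof.
move=> H a x z; have := H; case => Hl _ _ _.
by rewrite -[a *: x]addr0 Hl (br0l H) addr0.
Qed.

Lemma brZr (F : fieldType) (L : vectType F) (br : L -> L -> L) :
  is_lie_bracket br -> forall a x z, br z (a *: x) = a *: br z x.
Proof.
move=> H a x z; have := H; case => _ Hl _ _.
by rewrite -[a *: x]addr0 Hl (br0r H) addr0.
Qed.

Lemma brNl (F : fieldType) (L : vectType F) (br : L -> L -> L) :
  is_lie_bracket br -> forall x z, br (- x) z = - br x z.
Proof. by move=> H x z; rewrite -scaleN1r (brZl H) scaleN1r. Qed.

Lemma brNr (F : fieldType) (L : vectType F) (br : L -> L -> L) :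
  is_lie_bracket br -> forall x z, br z (- x) = - br z x.
Proof. by move=> H x z; rewrite -scaleN1r (brZr H) scaleN1r. Qed.

Lemma brBl (F : fieldType) (L : vectType F) (br : L -> L -> L) :
  is_lie_bracket br -> forall x y z, br (x - y) z = br x z - br y z.
Proof. by move=> H x y z; rewrite (brDl H) (brNl H). Qed.

Lemma brBr (F : fieldType) (L : vectType F) (br : L -> L -> L) :
  is_lie_bracket br -> forall x y z, br z (x - y) = br z x - br z y.
Proof. by move=> H x y z; rewrite (brDr H) (brNr H). Qed.

Lemma brxx (F : fieldType) (L : vectType F) (br : L -> L -> L) :
  is_lie_bracket br -> forall x, br x x = 0.
Proof. by case. Qed.

Lemma brC (F : fieldType) (L : vectType F) (br : L -> L -> L) :
  is_lie_bracket br -> forall x y, br y x = - br x y.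
Proof.
move=> H x y; have := brxx H (x + y).
rewrite (brDl H) !(brDr H) !(brxx H) add0r addr0 => /eqP.
by rewrite addrC addr_eq0 => /eqP.
Qed.

Lemma brsum_l (F : fieldType) (L : vectType F) (br : L -> L -> L) :
  is_lie_bracket br -> forall n (c : 'I_n -> F) (v : 'I_n -> L) z,
  br (\sum_i c i *: v i) z = \sum_i c i *: br (v i) z.
Proof.
move=> H n c v z; elim/big_rec2: _ => [|i a b _ <-]; first exact: br0l.
by rewrite (brDl H) (brZl H).
Qed.

Lemma brsum_r (F : fieldType) (L : vectType F) (br : L -> L -> L) :
  is_lie_bracket br -> forall n (c : 'I_n -> F) (v : 'I_n -> L) z,
  br z (\sum_i c i *: v i) = \sum_i c i *: br z (v i).
Proof.
move=> H n c v z; elim/big_rec2: _ => [|i a b _ <-]; first exact: br0r.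
by rewrite (brDr H) (brZr H).
Qed.

Lemma mem_brsp (F : fieldType) (L : vectType F) (br : L -> L -> L) :
  is_lie_bracket br -> forall (A B : {vspace L}) a b, a \in A -> b \in B -> br a b \in brsp br A B.
Proof.
move=> H A B a b Aa Bb.
rewrite (coord_vbasis Aa) (brsum_l H); apply: memv_suml => i _; apply: memvZ.
rewrite (coord_vbasis Bb) (brsum_r H); apply: memv_suml => j _; apply: memvZ.
apply: memv_span; apply: allpairs_f; apply: mem_nth; by rewrite size_tuple.
Qed.

Lemma brsp_sub (F : fieldType) (L : vectType F) (br : L -> L -> L) (A B W : {vspace L}) :
  (forall a b, a \in A -> b \in B -> br a b \in W) -> (brsp br A B <= W)%VS.
Proof.
move=> H; apply/span_subvP => w /allpairsP [[a b] [/= Ha Hb ->]].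
by apply: H; apply: vbasis_mem.
Qed.


Lemma memvZV (F : fieldType) (L : vectType F) (U : {vspace L}) k v :
  k != 0 -> k *: v \in U -> v \in U.
Proof. by move=> k0 H; rewrite -(scalerK k0 v); apply: memvZ. Qed.

Lemma iter_sub (F : fieldType) (L : vectType F) (br : L -> L -> L) n (X : {vspace L}) :
  (X <= iter n (fun S => (S + brsp br S S)%VS) X)%VS.
Proof.
elim: n => [|n IH] //=; exact: subv_trans IH (addvSl _ _).
Qed.

Lemma gen_sub (F : fieldType) (L : vectType F) (br : L -> L -> L) (X : {vspace L}) :
  (X <= gen br X)%VS.
Proof. exact: iter_sub. Qed.

Lemma gen_br (F : fieldType) (L : vectType F) (br : L -> L -> L) :
  is_lie_bracket br -> (0 < \dim (fullv : {vspace L}))%N ->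
  forall (X : {vspace L}) a b, a \in X -> b \in X -> br a b \in gen br X.
Proof.
move=> H; rewrite /gen; case: (\dim fullv) => // n _ X a b Ha Hb /=.
apply: (subvP (addvSr _ _)); apply: (mem_brsp H); exact: (subvP (iter_sub _ _ _)).
Qed.

Lemma gen_id (F : fieldType) (L : vectType F) (br : L -> L -> L) (X : {vspace L}) :
  subalgebra br X -> gen br X = X.
Proof.
move=> HX; rewrite /gen; elim: (\dim fullv) => // n IH /=; rewrite IH.
by apply/addv_idPl; apply: brsp_sub => a b; apply: HX.
Qed.

Lemma subalg_line (F : fieldType) (L : vectType F) (br : L -> L -> L) :
  is_lie_bracket br -> forall v, subalgebra br <[v]>%VS.
Proof.
move=> H v a b /vlineP [k ->] /vlineP [l ->].
by rewrite (brZl H) (brZr H) (brxx H) !scaler0 mem0v.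
Qed.

Lemma cap_line0 (F : fieldType) (L : vectType F) (Q : {vspace L}) y :
  y \notin Q -> (Q :&: <[y]> = 0)%VS.
Proof.
move=> yQ; apply/eqP; rewrite -subv0; apply/subvP => w /memv_capP [wQ /vlineP [k Ew]].
rewrite memv0; have [k0|k0] := eqVneq k 0; first by rewrite Ew k0 scale0r.
by move: wQ; rewrite Ew => /(memvZV k0) yQ'; rewrite yQ' in yQ.
Qed.

Lemma key_mod (F : fieldType) (L : vectType F) (br : L -> L -> L) (Q : {vspace L}) :
  is_lie_bracket br -> modular_star br Q -> forall c y, c \in Q -> y \notin Q ->
  (gen br (<[y]> + <[c]>) :&: Q)%VS = <[c]>%VS.
Proof.
move=> H [_ [_ Hm]] c y cQ yQ.
have := Hm <[y]>%VS <[c]>%VS (@subalg_line _ _ _ H y) (@subalg_line _ _ _ H c).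
rewrite /genU (cap_line0 yQ) add0v (gen_id (@subalg_line _ _ _ H c)) => <- //.
Qed.


Lemma dim_pos (F : fieldType) (L : vectType F) (Q : {vspace L}) y :
  y \notin Q -> (0 < \dim (fullv : {vspace L}))%N.
Proof.
move=> yQ; rewrite lt0n dimv_eq0; apply/negP => /eqP E.
by move: (memvf y); rewrite E memv0 => /eqP y0; rewrite y0 mem0v in yQ.
Qed.

Lemma lemA (F : fieldType) (L : vectType F) (br : L -> L -> L) (Q : {vspace L}) :
  is_lie_bracket br -> quasi_ideal br Q -> modular_star br Q ->
  forall c y, c \in Q -> y \notin Q -> exists a l, br c y = a *: c + l *: y.
Proof.
move=> H [_ HQ] Hm c y cQ yQ.
have := subvP (HQ <[y]>%VS) _ (mem_brsp H cQ (memv_line y)).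
case/memv_addP => q qQ [t /vlineP [l ->] E].
have : q \in (gen br (<[y]> + <[c]>) :&: Q)%VS.
  rewrite memv_cap qQ andbT.
  have -> : q = br c y - l *: y by rewrite E addrK.
  apply: memvB; first by apply: (gen_br H (dim_pos yQ));
    [apply: (subvP (addvSr _ _)) | apply: (subvP (addvSl _ _))]; exact: memv_line.
  by apply: (subvP (gen_sub _ _)); apply: (subvP (addvSl _ _)); apply: memvZ; exact: memv_line.
rewrite (key_mod H Hm cQ yQ) => /vlineP [a Eq]; exists a, l; by rewrite E Eq.
Qed.


Lemma exists_out (F : fieldType) (L : vectType F) (Q : {vspace L}) :
  Q != fullv -> exists2 z, z \in fullv & z \notin Q.
Proof.
move=> HP; apply/subvPn; apply: contra HP => h; apply/eqP/subv_anti.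
by rewrite h subvf.
Qed.

Lemma lemB (F : fieldType) (L : vectType F) (br : L -> L -> L) (Q : {vspace L}) :
  is_lie_bracket br -> quasi_ideal br Q -> Q != fullv -> modular_star br Q ->
  forall c y, c \in Q -> exists a l, br c y = a *: c + l *: y.
Proof.
move=> H HQ HP Hm c y cQ.
have [yQ|yQ] := boolP (y \in Q); last exact: (lemA H HQ Hm cQ yQ).
have [z _ zQ] := exists_out HP.
have zyQ : z + y \notin Q.
  by apply: contra zQ => h; rewrite -(addrK y z); apply: memvB.
have [a [l E1]] := lemA H HQ Hm cQ zQ.
have [b [m E2]] := lemA H HQ Hm cQ zyQ.
have E : br c y = (b - a) *: c + (m - l) *: z + m *: y.
  have -> : br c y = br c ((z + y) - z) by rewrite [z + y]addrC addrK.
  rewrite (brBr H) E1 E2 !scalerBl scalerDr opprD addrACA -[RHS]addrA.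
  by congr (_ + _); exact: addrAC.
have mQ : (m - l) *: z \in Q.
  have -> : (m - l) *: z = br c y - (b - a) *: c - m *: y.
    by rewrite E addrAC addrK addrC addKr.
  by apply: memvB; [apply: memvB; [case: HQ => [Hs _]; apply: Hs | apply: memvZ] | apply: memvZ].
have ml : m - l = 0.
  by apply/eqP; apply: contraNT zQ => h; exact: (memvZV h mQ).
by exists (b - a), m; rewrite E ml scale0r addr0.
Qed.


Section FRing.
Variable F : fieldType.
Notation FT := (GRing.PzSemiRing.sort F).
Definition fadd (a b : FT) : FT := a + b.
Definition fmul (a b : FT) : FT := a * b.
Definition fopp (a : FT) : FT := - a.
Definition fsub (a b : FT) : FT := fadd a (fopp b).
Definition f0 : FT := 0.
Definition f1 : FT := 1.
Lemma Fring : @ring_theory FT f0 f1 fadd fmul fsub fopp eq.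
Proof.
rewrite /fadd/fmul/fsub/fopp/f0/f1.
split=> //; [exact: add0r|exact: addrC|exact: addrA|exact: mul1r|exact: mulrC|exact: mulrA|exact: mulrDl|exact: subrr].
Qed.

Variable V : lmodType F.
Inductive tm := At of 'I_4 | Add of tm & tm | Opp of tm | Scl of F & tm | Zero.
Fixpoint eval (e : 'I_4 -> V) t : V :=
  match t with
  | At i => e i | Add a b => eval e a + eval e b | Opp a => - eval e a
  | Scl k a => k *: eval e a | Zero => 0 end.
Fixpoint coef (i : 'I_4) t : F :=
  match t with
  | At j => if i == j then 1 else 0 | Add a b => coef i a + coef i b
  | Opp a => - coef i a | Scl k a => k * coef i a | Zero => 0 end.
Lemma eval_coef e t : eval e t = \sum_i coef i t *: e i.
Proof.
elim: t => [j|a IHa b IHb|a IHa|k a IHa|] /=.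
- rewrite (bigD1 j) //= eqxx scale1r big1 ?addr0 // => i /negbTE ->; exact: scale0r.
- by rewrite IHa IHb -big_split /=; apply: eq_bigr => i _; rewrite scalerDl.
- by rewrite IHa -sumrN; apply: eq_bigr => i _; rewrite scaleNr.
- by rewrite IHa scaler_sumr; apply: eq_bigr => i _; rewrite scalerA.
- by rewrite big1 // => i _; rewrite scale0r.
Qed.
Lemma lin_eq e t1 t2 : (forall i, coef i t1 = coef i t2) -> eval e t1 = eval e t2.
Proof. by move=> H; rewrite !eval_coef; apply: eq_bigr => i _; rewrite H. Qed.
End FRing.

Ltac fring F := match goal with |- ?a = ?b => change (@eq (GRing.PzSemiRing.sort F) a b) end;
  repeat (change (GRing.one _) with (@f1 F)); repeat (change (@Algebra.zero _) with (@f0 F)); rewrite -?/(fadd _ _) -?/(fmul _ _) -?/(fopp _) -?/f0 -?/f1; ring.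

Ltac reify F V a1 a2 a3 a4 t :=
  match t with
  | @Algebra.zero _ => constr:(@Zero F)
  | a1 => constr:(@At F (@Ordinal 4 0 isT))
  | a2 => constr:(@At F (@Ordinal 4 1 isT))
  | a3 => constr:(@At F (@Ordinal 4 2 isT))
  | a4 => constr:(@At F (@Ordinal 4 3 isT))
  | @Algebra.add _ ?a ?b =>
      let ra := reify F V a1 a2 a3 a4 a in let rb := reify F V a1 a2 a3 a4 b in constr:(@Add F ra rb)
  | @Algebra.opp _ ?a => let ra := reify F V a1 a2 a3 a4 a in constr:(@Opp F ra)
  | @GRing.scale _ _ ?k ?a => let ra := reify F V a1 a2 a3 a4 a in constr:(@Scl F k ra)
  | @Algebra.zero _ => constr:(@Zero F)
  end.

Ltac lin F V a1 a2 a3 a4 :=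
  match goal with |- ?l = ?r =>
    let rl := reify F V a1 a2 a3 a4 l in let rr := reify F V a1 a2 a3 a4 r in
    let e := constr:(fun i : 'I_4 => match val i with 0 => a1 | 1 => a2 | 2 => a3 | _ => a4 end) in
    change (@eval F V e rl = eval e rr); apply: lin_eq;
    case=> [[|[|[|[|//]]]] ?] /=; fring F
  end.



Lemma lin_use (F : fieldType) (V : lmodType F) (A B P Q : V) k :
  A = B -> P = Q + k *: (A - B) -> P = Q.
Proof. by move=> -> ->; rewrite subrr scaler0 addr0. Qed.

Lemma lin_use2 (F : fieldType) (V : lmodType F) (A B A' B' P Q : V) k k' :
  A = B -> A' = B' -> P = Q + k *: (A - B) + k' *: (A' - B') -> P = Q.
Proof. by move=> -> -> ->; rewrite !subrr !scaler0 !addr0. Qed.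

Section Main.
Variable F : fieldType.
Add Ring Fr : (@Fring F).

Lemma step1 (L : vectType F) (br : L -> L -> L) x y0 a : is_lie_bracket br ->
  (forall y, exists b l, br x y = b *: x + l *: y) ->
  br x y0 = a *: x + y0 -> y0 \notin <[x]>%VS ->
  forall y, exists g, br x y = g *: x + y.
Proof.
move=> H HB H0 Hy0 y.
have [b [l E1]] := HB y; have [c [n E2]] := HB (y + y0).
have E : c *: x + n *: (y + y0) = b *: x + l *: y + (a *: x + y0).
  by rewrite -E2 (brDr H) E1 H0.
have Ee : (l - n) *: y + (1 - n) *: y0 = (c - b - a) *: x.
  by apply: (lin_use (k := -1) E); lin F L x y y0 (0 : L).
have Ef : (l - n) *: (b *: x + l *: y) + (1 - n) *: (a *: x + y0) = 0.
  have := congr1 (br x) Ee.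
  by rewrite (brDr H) !(brZr H) E1 H0 (brxx H) scaler0.
have Ey : ((l - n) * (l - 1)) *: y = (- ((l - n) * b + (1 - n) * a) - (c - b - a)) *: x.
  by apply: (lin_use2 (k := 1) (k' := -1) Ef Ee); lin F L x y y0 (0 : L).
have [ln|ln] := eqVneq (l - n) 0.
  move: Ee; rewrite ln scale0r add0r => Ee.
  have n1 : 1 - n = 0.
    apply/eqP; apply: contraNT Hy0 => h; apply/vlineP.
    by exists ((1 - n)^-1 * (c - b - a)); rewrite -scalerA -Ee scalerA mulVf // scale1r.
  exists b; rewrite E1.
  have -> : l = 1.
    by move/eqP: ln; rewrite subr_eq0 => /eqP ->; move/eqP: n1; rewrite subr_eq0 => /eqP <-.
  by rewrite scale1r.
set K := (- ((l - n) * b + (1 - n) * a) - (c - b - a)).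
have Ey' : (l - 1) *: y = ((l - n)^-1 * K) *: x.
  by rewrite -scalerA -Ey scalerA mulrA mulVf // mul1r.
exists (b + (l - n)^-1 * K); rewrite E1.
by apply: (lin_use (k := 1) Ey'); lin F L x y y0 (0 : L).
Qed.



Lemma jac (L : vectType F) (br : L -> L -> L) : is_lie_bracket br ->
  forall x y z, br x (br y z) + br y (br z x) + br z (br x y) = 0.
Proof. by case. Qed.

Lemma F1 (L : vectType F) (br : L -> L -> L) x : is_lie_bracket br ->
  (forall y, exists g, br x y = g *: x + y) ->
  forall u v, br x u = u -> br x v = v ->
  exists g, br u v = g *: x /\ (g + g) *: x = 0.
Proof.
move=> H Hx u v Pu Pv.
have J := jac H x u v.
rewrite (brC H x v) Pv (brNr H) Pu (brC H u v) in J.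
have E2 : br x (br u v) = br u v + br u v.
  by apply: (lin_use (k := 1) J); lin F L (br x (br u v)) (br u v) (0:L) (0:L).
have [g Eg] := Hx (br u v).
have Euv : br u v = g *: x.
  by apply: (lin_use (k := 1) (etrans (esym E2) Eg)); lin F L (br u v) x (0:L) (0:L).
exists g; split => //.
have := E2; rewrite Euv (brZr H) (brxx H) scaler0 => E0.
by rewrite scalerDl E0.
Qed.

Lemma decomp (L : vectType F) (br : L -> L -> L) x : is_lie_bracket br ->
  (forall y, exists g, br x y = g *: x + y) ->
  forall y, exists g w, br x w = w /\ y = w - g *: x.
Proof.
move=> H Hx y; have [g Eg] := Hx y.
exists g, (br x y); split; last by rewrite Eg; lin F L x y (0:L) (0:L).
by rewrite {1}Eg (brDr H) (brZr H) (brxx H) scaler0 add0r.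
Qed.

Lemma P_comb (L : vectType F) (br : L -> L -> L) x : is_lie_bracket br ->
  forall a b u v, br x u = u -> br x v = v -> br x (a *: u + b *: v) = a *: u + b *: v.
Proof. by move=> H a b u v Pu Pv; rewrite (brDr H) !(brZr H) Pu Pv. Qed.


Lemma span_brsp (L : vectType F) (br : L -> L -> L) : is_lie_bracket br ->
  forall x, (forall a b, br x (br a b) = br a b) ->
  forall w, w \in brsp br fullv fullv -> br x w = w.
Proof.
move=> H x Hab w; rewrite /brsp.
set s := [seq br a b | a <- _, b <- _] => Hw.
have Hw' : w \in span (in_tuple s) by [].
rewrite {1 2}(coord_span Hw') (brsum_r H); apply: eq_bigr => i _; congr (_ *: _).
have : (in_tuple s)`_i \in s by apply: mem_nth; exact: ltn_ord.
by case/allpairsP => [[a b] [_ _ ->]]; apply: Hab.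
Qed.

Lemma caseA (L : vectType F) (br : L -> L -> L) x : is_lie_bracket br ->
  (forall y, exists g, br x y = g *: x + y) ->
  (forall u v, br x u = u -> br x v = v -> br u v = 0) -> almost_abelian br.
Proof.
move=> H Hx Hab.
have Pbr : forall a b, br x (br a b) = br a b.
  move=> a b.
  have [ga [ua [Pa Ea]]] := decomp H Hx a.
  have [gb [ub [Pb Eb]]] := decomp H Hx b.
  have E : br a b = gb *: ua - ga *: ub.
    rewrite Ea Eb !(brBl H) !(brBr H) !(brZl H) !(brZr H) (Hab _ _ Pa Pb) (brxx H).
    rewrite (brC H x ua) Pa Pb; lin F L ua ub x (0:L).
  by rewrite E (brBr H) !(brZr H) Pa Pb.
have PL2 := span_brsp H Pbr.
exists x => /=; split.
- apply/subv_anti; rewrite subvf /=; apply/subvP => y _.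
  have [g [w [Pw ->]]] := decomp H Hx y.
  apply: memv_add; last by rewrite memvN; apply: memvZ; exact: memv_line.
  by rewrite -Pw; apply: (mem_brsp H); apply: memvf.
- apply/eqP; rewrite -subv0; apply/subvP => w /memv_capP [wL /vlineP [k Ew]].
  rewrite memv0; have := PL2 _ wL; rewrite Ew (brZr H) (brxx H) scaler0 => <-.
  by [].
- by move=> u v uL vL; apply: Hab; apply: PL2.
- exact: PL2.
Qed.


Lemma W0 (L : vectType F) (br : L -> L -> L) (Q : {vspace L}) x a b al be :
  is_lie_bracket br -> modular_star br Q -> x != 0 -> x \in Q ->
  br x a = a -> br x b = b -> br b a = x -> a \notin Q ->
  al *: a + be *: b \in Q -> al *: a + be *: b = 0.
Proof.
move=> H Hm x0 xQ Pa Pb Eba aQ wQ.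
set w := al *: a + be *: b in wQ *.
have Pw : br x w = w by rewrite /w (P_comb H).
have Ewa : br w a = be *: x by rewrite /w (brDl H) !(brZl H) (brxx H) Eba scaler0 add0r.
have : br w a \in (gen br (<[a]> + <[w]>) :&: Q)%VS.
  rewrite memv_cap; apply/andP; split.
    apply: (gen_br H (dim_pos aQ)); [apply: (subvP (addvSr _ _)) | apply: (subvP (addvSl _ _))]; exact: memv_line.
  by rewrite Ewa; apply: memvZ.
rewrite (key_mod H Hm wQ aQ) Ewa => /vlineP [k Ek].
have be0 : be = 0.
  apply/eqP; apply/negP => /negP be0; move/negP: x0; apply.
  have Ex : x = (be^-1 * k) *: w by rewrite -scalerA -Ek scalerA mulVf // scale1r.
  apply/eqP; have := brxx H x; rewrite {2}Ex (brZr H) Pw -Ex => <-; by [].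
have al0 : al = 0.
  apply/eqP; apply/negP => /negP al0; move/negP: aQ; apply.
  by move: wQ; rewrite /w be0 scale0r addr0 => /(memvZV al0).
by rewrite /w al0 be0 !scale0r addr0.
Qed.

Lemma caseB (L : vectType F) (br : L -> L -> L) (Q : {vspace L}) x u v :
  is_lie_bracket br -> modular_star br Q -> Q != fullv -> x != 0 -> x \in Q ->
  (forall y, exists g, br x y = g *: x + y) ->
  br x u = u -> br x v = v -> br u v != 0 ->
  (2%N \in [pchar F]) /\ iso_K_with br Q.
Proof.
move=> H Hm HP x0 xQ Hx Pu Pv uv0.
have [g [Eg Eg2]] := F1 H Hx Pu Pv.
have g0 : g != 0 by apply: contraNneq uv0 => g0; rewrite Eg g0 scale0r.
have two : (1 + 1 : F) = 0.
  have gg : g + g = 0 by move/eqP: Eg2; rewrite scaler_eq0 (negbTE x0) orbF => /eqP.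
  have : (1 + 1) * g = 0 by rewrite mulrDl mul1r.
  by move/eqP; rewrite mulf_eq0 (negbTE g0) orbF => /eqP.
have N : forall w : L, - w = w.
  move=> w; apply/eqP; rewrite eq_sym -subr_eq0 opprK -{1 2}(scale1r w) -scalerDl two.
  by rewrite scale0r.
set v' := g^-1 *: v.
have Pv' : br x v' = v' by rewrite /v' (brZr H) Pv.
have Euv : br u v' = x by rewrite /v' (brZr H) Eg scalerA mulVf // scale1r.
have Evu : br v' u = x by rewrite (brC H u v') Euv N.
have spanP : forall w, br x w = w -> exists p q, w = p *: u + q *: v'.
  move=> w Pw.
  have [p [Ep _]] := F1 H Hx Pv' Pw.
  have [q [Eq _]] := F1 H Hx Pw Pu.
  have J := jac H u v' w.
  rewrite Ep Eq Euv !(brZr H) (brC H x u) (brC H x v') (brC H x w) Pu Pv' Pw in J.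
  exists (- p), (- q).
  by apply: (lin_use (k := -1) J); lin F L u v' w (0:L).
have decompP : forall y, exists p q r, y = p *: u + q *: v' + r *: x.
  move=> y; have [g' [w [Pw Ey]]] := decomp H Hx y.
  have [p [q Ew]] := spanP w Pw.
  exists p, q, (- g'); rewrite Ey Ew; lin F L u v' x (0:L).
split.
  rewrite inE /=; apply/eqP; by rewrite -mulr2n in two.
exists u, v', x; split => //.
- rewrite /basis_of; apply/andP; split.
    apply/eqP/subv_anti; rewrite subvf /=; apply/subvP => y _.
    have [p [q [r ->]]] := decompP y.
    rewrite span_cons (span_cons v') span_seq1 -addrA; apply: memv_add; first by apply: memvZ; exact: memv_line.
    by apply: memv_add; apply: memvZ; exact: memv_line.
  rewrite free_cons span_cons span_seq1; apply/andP; split.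
    apply/negP => /memv_addP [a /vlineP [s ->] [b /vlineP [t ->] E]].
    have Eu : u = s *: v'.
      by have := congr1 (br x) E; rewrite (brDr H) !(brZr H) Pu Pv (brxx H) scaler0 addr0.
    by move/negP: x0; apply; rewrite -Euv Eu (brZl H) (brxx H) scaler0.
  rewrite free_cons span_seq1 seq1_free x0 andbT.
  apply/negP => /vlineP [t Ev].
  have : v' = 0 by rewrite -Pv' Ev (brZr H) (brxx H) scaler0.
  by move=> v0; move/negP: x0; apply; rewrite -Euv v0 (br0r H).
- by rewrite (brC H x v') Pv' N.
- by rewrite (brC H x u) Pu N.
- apply/subv_anti; apply/andP; split; last first.
    by apply/subvP => y /vlineP [k ->]; apply: memvZ.
  have uvQ : (u \notin Q) \/ (v' \notin Q).
    apply: NNPP => /not_or_and [/negP /negbNE uQ /negP /negbNE vQ].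
    move/negP: HP; apply; apply/eqP/subv_anti; rewrite subvf /=.
    apply/subvP => y _; have [p [q [r ->]]] := decompP y.
    by apply: memvD; [apply: memvD|]; apply: memvZ.
  apply/subvP => y yQ; have [p [q [r Ey]]] := decompP y.
  have wQ : p *: u + q *: v' \in Q.
    have -> : p *: u + q *: v' = y - r *: x by rewrite Ey addrK.
    by apply: memvB => //; apply: memvZ.
  have w0 : p *: u + q *: v' = 0.
    case: uvQ => [uQ|vQ].
      by apply: (W0 H Hm x0 xQ Pu Pv' Evu uQ wQ).
    rewrite addrC; apply: (W0 H Hm x0 xQ Pv' Pu Euv vQ); by rewrite addrC.
  by rewrite Ey w0 add0r; apply: memvZ; exact: memv_line.
Qed.

End Main.

Theorem proposition3p2 (F : fieldType) (L : vectType F) (br : L -> L -> L)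
    (Hlie : is_lie_bracket br) (Q : {vspace L})
    (HQ : quasi_ideal br Q) (Hproper : Q != fullv)
    (Hmod : modular_star br Q) :
  strong_quasi_ideal br Q /\
  (strong_ideal br Q \/ almost_abelian br \/
   (2%N \in [pchar F] /\ iso_K_with br Q)).
Proof.
have Hsub : subalgebra br Q by case: HQ.
have HB := lemB Hlie HQ Hproper Hmod.
split.
  split => // S SQ dS subS; split => //.
  have v0 : vpick S != 0 by rewrite vpick0 -dimv_eq0 dS.
  have ES : S = <[vpick S]>%VS.
    apply/eqP; rewrite eq_sym eqEdim dS dim_vline v0 andbT.
    by apply/subvP => y /vlineP [k ->]; apply: memvZ; apply: memv_pick.
  move=> V; apply: brsp_sub => a b aS bV.
  move: aS; rewrite ES => /vlineP [k ->].
  have [al [l E]] := HB (vpick S) b (subvP SQ _ (memv_pick S)).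
  rewrite (brZl Hlie) E scalerDr !scalerA; apply: memv_add; apply: memvZ => //.
  exact: memv_line.
have [Hall|Hn] := classic (forall S : {vspace L}, (S <= Q)%VS -> \dim S = 1%N ->
  subalgebra br S -> ideal br S).
  by left; split.
right.
have [S HS] := not_all_ex_not _ _ Hn.
have [SQ HS1] := imply_to_and _ _ HS.
have [dS HS2] := imply_to_and _ _ HS1.
have [subS HS3] := imply_to_and _ _ HS2.
have [x1 [y0 [x1S Hx1]]] : exists x1 y0, x1 \in S /\ br x1 y0 \notin S.
  apply: NNPP => Hc; apply: HS3 => x1 y0 x1S; apply: NNPP => h; apply: Hc.
  by exists x1, y0; split => //; apply/negP.
have x1Q : x1 \in Q by apply: (subvP SQ).
have Hnl : br x1 y0 \notin <[x1]>%VS.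
  apply: contra Hx1; apply: (subvP _); apply/subvP => z /vlineP [k ->]; exact: memvZ.
have [a [l E]] := HB x1 y0 x1Q.
have l0 : l != 0.
  apply: contraNneq Hnl => l0; rewrite E l0 scale0r addr0; apply: memvZ; exact: memv_line.
set x := l^-1 *: x1.
have xQ : x \in Q by apply: memvZ.
have Ex0 : br x y0 = a *: x + y0.
  rewrite /x (brZl Hlie) E scalerDr !scalerA mulVf // scale1r mulrC.
  by rewrite -scalerA.
have Hy0 : y0 \notin <[x]>%VS.
  apply/negP => /vlineP [t Et]; move/negP: Hnl; apply.
  by rewrite Et /x (brZr Hlie) (brZr Hlie) (brxx Hlie) !scaler0 mem0v.
have x0 : x != 0.
  apply/negP => /eqP x0; move/negP: Hy0; apply.
  have : y0 = 0 by move: Ex0; rewrite x0 (br0l Hlie) scaler0 add0r.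
  by move=> ->; rewrite mem0v.
have Hx := step1 Hlie (fun y => HB x y xQ) Ex0 Hy0.
have [Hex|Hnex] := classic (exists u v, br x u = u /\ br x v = v /\ br u v != 0).
  right; have [u [v [Pu [Pv uv]]]] := Hex.
  exact: (caseB Hlie Hmod Hproper x0 xQ Hx Pu Pv uv).
left; apply: (caseA Hlie Hx) => u v Pu Pv.
apply/eqP; apply: NNPP => h; apply: Hnex; exists u, v; split => //; split => //.
by apply/negP.
Qed.
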